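(* Let $S=K[x_1,\ldots,x_n]$. If $I$ is an $f$-ideal of $S$ of degree $2$, then $I$ is of $l$ type for some $1\le l\le\lfloor n/2\rfloor$ if and only if the complement graph $\overline{\tau(G(I))}$ is bipartite.
   Context: $K$ is a field; $G(I)$ is the minimal monomial generating set of $I$; ''of degree $2$'' means all elements of $G(I)$ have degree $2$. With $\sigma$ the bijection $x_{i_1}\cdots x_{i_k}\mapsto\{i_1,\ldots,i_k\}$, the facet complex $\delta_{\mathcal{F}}(I)$ has facets $\sigma(g)$, $g\in G(I)$, the Stanley–Reisner complex is $\delta_{\mathcal{N}}(I)=\{\sigma(g)\mid g \text{ square-free monomial},\ g\notin I\}$, and $I$ is an $f$-ideal if both complexes have the same $f$-vector. For a nonempty proper subset $B\subset[n]$ with complement $\overline B$, $W_B=\{x_ix_j\mid i,j\in B \text{ or } i,j\in\overline B,\ i\neq j\}$. A set $A$ of square-free monomials of degree 2 satisfies $l^{th}$ TPCS if $W_B\subseteq A$ for some $B\subseteq[n]$ with $|B|=l$; an $f$-ideal $I$ is of $l$ type if $G(I)$ satisfies $l^{th}$ TPCS. For $A$ a set of degree-2 square-free monomials, $\tau(A)$ is the graph on vertices $v_1,\ldots,v_n$ with $v_iv_j$ an edge iff $x_ix_j\in A$. *)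

(* Defs.v *)
(* Squarefree monomials in x_1..x_n are identified (via sigma)
   with subsets of the variable index set 'I_n. A squarefree monomial ideal I
   of degree 2 is given by its minimal generating set G(I), i.e. a set of
   2-element subsets of 'I_n. *)
From mathcomp Require Import all_boot all_order.
Set Implicit Arguments. Unset Strict Implicit. Unset Printing Implicit Defensive.

Section Defs.
Variable n : nat.
Implicit Types (G A : {set {set 'I_n}}) (B F : {set 'I_n}).

Definition sqfree_deg2 G := forall e, e \in G -> #|e| = 2.

Definition facet_complex G : {set {set 'I_n}} :=
  [set F : {set 'I_n} | [exists e in G, F \subset e]].

(* Stanley--Reisner complex: sigma(g) for squarefree monomials g not in I;
   g lies in the monomial ideal I iff some generator divides g. *)
Definition SR_complex G : {set {set 'I_n}} :=
  [set F : {set 'I_n} | [forall e in G, ~~ (e \subset F)]].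

(* f_{k-1}: number of faces with k vertices *)
Definition fcount (D : {set {set 'I_n}}) (k : nat) := #|[set F in D | #|F| == k]|.

Definition f_ideal G := forall k, fcount (facet_complex G) k = fcount (SR_complex G) k.

Definition W_B B : {set {set 'I_n}} :=
  [set e : {set 'I_n} | (#|e| == 2) && ((e \subset B) || (e \subset ~: B))].

Definition TPCS (l : nat) A := exists B, #|B| = l /\ W_B B \subset A.

Definition of_l_type (l : nat) G := TPCS l G.

Definition tau_adj A : rel 'I_n := fun i j => (i != j) && ([set i; j] \in A).
Definition compl_tau_adj A : rel 'I_n := fun i j => (i != j) && ~~ ([set i; j] \in A).

Definition bipartite (r : rel 'I_n) :=
  exists c : 'I_n -> bool, forall i j, r i j -> c i != c j.
End Defs.

(* Main.v *)
Require Import Defs.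
From mathcomp Require Import all_boot all_order.
From mathcomp Require Import zify.

Lemma WBC n (B : {set 'I_n}) : W_B (~: B) = W_B B.
Proof. by apply/setP => e; rewrite !inE setCK [(_ \subset ~: B) || _]orbC. Qed.

Lemma sub2 n (x y : 'I_n) (B : {set 'I_n}) :
  x \in B -> y \in B -> [set x; y] \subset B.
Proof. by move=> hx hy; apply/subsetP => z; rewrite !inE => /orP[]/eqP->. Qed.

Theorem proposition4p4 (n : nat) (G : {set {set 'I_n}}) :
  sqfree_deg2 G -> f_ideal G ->
  ((exists l : nat, 1 <= l <= n./2 /\ of_l_type l G) <->
   bipartite (compl_tau_adj G)).
Proof.
move=> hsq hf; split.
  move=> [l [_ [B [_ hW]]]].
  exists (fun i => i \in B) => i j /andP[hij hnG].
  apply/negP => /eqP hc; move/negP: hnG; apply.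
  apply: (subsetP hW); rewrite inE cards2 hij /=.
  case hi: (i \in B); move: hc; rewrite hi => /esym hj.
    by rewrite sub2.
  by rewrite orbC sub2 // inE ?hi ?hj.
move=> [c hc].
have h0 := hf 0.
have [e eG] : exists e, e \in G.
  have : 0 < fcount (SR_complex G) 0.
    rewrite card_gt0; apply/set0Pn; exists set0.
    rewrite !inE cards0 eqxx andbT; apply/forall_inP => e eG.
    by rewrite subset0 -cards_eq0 hsq.
  rewrite -h0 card_gt0 => /set0Pn [F]; rewrite !inE => /andP[/exists_inP[e eG _] _].
  by exists e.
have [x [y [xy xyG]]] : exists x y, x != y /\ [set x; y] \notin G.
  have : 0 < fcount (SR_complex G) 2.
    rewrite -hf card_gt0; apply/set0Pn; exists e.
    rewrite !inE hsq // eqxx andbT; apply/exists_inP; by exists e.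
  rewrite card_gt0 => /set0Pn [F]; rewrite !inE => /andP[/forall_inP hF /cards2P[x [y [xy FE]]]].
  exists x, y; split => //; apply/negP => Fin.
  by move: (hF _ Fin); rewrite -FE subxx.
have cxy : c x != c y by apply: hc; rewrite /compl_tau_adj xy xyG.
set B := [set i | c i].
have hW : W_B B \subset G.
  apply/subsetP => f; rewrite inE => /andP[/cards2P[u [v [uv ->]]] hs].
  apply/negPn/negP => hn.
  have := hc u v; rewrite /compl_tau_adj uv hn => /(_ isT) huv.
  have hu : u \in [set u; v] by rewrite !inE eqxx.
  have hv : v \in [set u; v] by rewrite !inE eqxx orbT.
  case/orP: hs => /subsetP hs.
    move: (hs u hu) (hs v hv) huv; rewrite /B !inE.
    by case: (c u); case: (c v).
  move: (hs u hu) (hs v hv) huv; rewrite /B !inE.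
  by case: (c u); case: (c v).
have hB1 : 0 < #|B|.
  rewrite card_gt0; apply/set0Pn.
  case hx: (c x); first by exists x; rewrite /B inE.
  by exists y; rewrite /B inE; move: cxy; rewrite hx; case: (c y).
have hB2 : 0 < #|~: B|.
  rewrite card_gt0; apply/set0Pn.
  case hx: (c x); last by exists x; rewrite /B !inE hx.
  by exists y; rewrite /B !inE; move: cxy; rewrite hx; case: (c y).
have hsum := cardsC B; rewrite card_ord in hsum.
case: (leqP #|B| #|~: B|) => hle.
  exists #|B|; split; last by exists B.
  by rewrite hB1 geq_half_double -addnn; lia.
exists #|~: B|; split; last by exists (~: B); rewrite WBC.
by rewrite hB2 geq_half_double -addnn; lia.
Qed.
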